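(* Let $(\mu^{(n)},\nu^{(n)})_{n\in\mathbb N}$ be a sequence in $\mathcal M_{\mathrm{tem}}(\mathbb R)^2$ (or in $\mathcal M_{\mathrm{rap}}(\mathbb R)^2$) converging to $(\mu,\nu)$, and assume $R(\mu^{(n)})\le L(\nu^{(n)})$ for all $n$. Then $$R(\mu)\le\liminf_{n\to\infty}R(\mu^{(n)})\le\limsup_{n\to\infty}L(\nu^{(n)})\le L(\nu).$$
   Context: $\phi_\lambda(x)=e^{-\lambda|x|}$. $\mathcal M_{\mathrm{tem}}(\mathbb R)$: nonnegative Radon measures with $\int\phi_\lambda d\mu<\infty$ for all $\lambda>0$, with $\mu_n\to\mu$ iff $\int\varphi d\mu_n\to\int\varphi d\mu$ for every continuous $\varphi$ such that, for some $\lambda>0$, $\sup|\varphi|/\phi_\lambda<\infty$ and $\varphi/\phi_\lambda$ has finite limits at $\pm\infty$. $\mathcal M_{\mathrm{rap}}(\mathbb R)$: those with $\int\phi_{-\lambda}d\mu<\infty$ for all $\lambda>0$, with $\mu_n\to\mu$ iff weak convergence as finite measures and $\sup_n\int\phi_{-\lambda}d\mu_n<\infty$ for all $\lambda>0$. ${\rm supp}(\mu)=\{x:\mu(B_\varepsilon(x))>0\ \forall\varepsilon>0\}$, $R(\mu)=\sup{\rm supp}(\mu)$, $L(\mu)=\inf{\rm supp}(\mu)$ in $\bar{\mathbb R}$ (with $\sup\emptyset=-\infty$, $\inf\emptyset=+\infty$). *)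

(* Defs.v *)
From HB Require Import structures.
From mathcomp Require Import all_boot all_order all_algebra.
From mathcomp Require Import all_classical all_reals all_analysis.
Set Implicit Arguments. Unset Strict Implicit. Unset Printing Implicit Defensive.
Import Order.TTheory GRing.Theory Num.Theory.
Import numFieldNormedType.Exports.
Local Open Scope classical_set_scope.
Local Open Scope ring_scope.
Local Open Scope ereal_scope.

Section Defs.
Variable R : realType.

(* Nonnegative Borel measures on R (Borel sigma-algebra = the canonical one). *)
Notation meas := {measure set R -> \bar R}.

Definition phi (lam x : R) : R := expR (- (lam * `|x|)).

(* Radon = locally finite: finite on every compact interval. *)
Definition radon (mu : meas) : Prop :=
  forall a b : R, mu `[a, b]%classic < +oo.

Definition Mtem (mu : meas) : Prop :=
  radon mu /\ forall lam : R, (0 < lam)%R -> \int[mu]_x (phi lam x)%:E < +oo.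

Definition Mrap (mu : meas) : Prop :=
  radon mu /\ forall lam : R, (0 < lam)%R -> \int[mu]_x (phi (- lam) x)%:E < +oo.

Definition tem_test (f : R -> R) : Prop :=
  continuous f /\
  exists2 lam : R, (0 < lam)%R &
    [/\ (exists C : R, forall x, `|f x| <= C * phi lam x)%R,
        (exists l : R, (fun x => (f x / phi lam x)%R) x @[x --> +oo%R] --> l) &
        (exists l : R, (fun x => (f x / phi lam x)%R) x @[x --> -oo%R] --> l)].

Definition tem_cvg (mun : nat -> meas) (mu : meas) : Prop :=
  forall f, tem_test f ->
    (fun n => \int[mun n]_x (f x)%:E) @ \oo --> \int[mu]_x (f x)%:E.

Definition rap_cvg (mun : nat -> meas) (mu : meas) : Prop :=
  (forall f : R -> R, continuous f -> (exists C : R, forall x, `|f x| <= C)%R ->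
    (fun n => \int[mun n]_x (f x)%:E) @ \oo --> \int[mu]_x (f x)%:E) /\
  (forall lam : R, (0 < lam)%R ->
    exists C : R, forall n, \int[mun n]_x (phi (- lam) x)%:E <= C%:E).

Definition supp (mu : meas) : set R :=
  [set x | forall e : R, (0 < e)%R -> 0 < mu (ball x e)].

(* R(mu) = sup supp(mu), L(mu) = inf supp(mu) in the extended reals,
   with sup set0 = -oo and inf set0 = +oo. *)
Definition Rsupp (mu : meas) : \bar R := ereal_sup [set x%:E | x in supp mu].
Definition Lsupp (mu : meas) : \bar R := ereal_inf [set x%:E | x in supp mu].

End Defs.

(* Main.v *)
Require Import Defs.
From HB Require Import structures.
From mathcomp Require Import all_boot all_order all_algebra.
From mathcomp Require Import all_classical all_reals all_analysis.
From mathcomp Require Import measurable_realfun.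
Import Order.TTheory GRing.Theory Num.Theory.
Import numFieldNormedType.Exports.
From mathcomp Require Import ring lra finmap.
Local Open Scope classical_set_scope.
Local Open Scope ring_scope.
Local Open Scope ereal_scope.

Section S.
Context {R : realType}.
Implicit Types nu : {measure set R -> \bar R}.

Lemma mball (x e : R) : measurable (ball x e).
Proof. by rewrite ball_itv; exact: measurable_itv. Qed.

Lemma supp_near nu (x e : R) : (0 < e)%R -> 0 < nu (ball x e) ->
  exists y, supp nu y /\ (`|x - y| <= e)%R.
Proof.
move=> e0 nu0; apply: contrapT => Hn.
have /choice [d Hd] : forall y : R, exists d : R, (0 < d)%R /\
    (`[(x - e)%R, (x + e)%R]%classic y -> nu (ball y d) = 0).
  move=> y; have [yI|yI] := pselect (`[(x - e)%R, (x + e)%R]%classic y); last first.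
    by exists 1%R; split.
  have : ~ supp nu y.
    move=> sy; apply: Hn; exists y; split => //.
    move: yI; rewrite /= in_itv /= => /andP[h1 h2].
    rewrite ler_norml; apply/andP; split; lra.
  move=> /existsNP [d /not_implyP [d0 hd]]; exists d; split => // _.
  by apply/eqP; rewrite eq_le measure_ge0 andbT leNgt; apply/negP.
have : compact `[(x - e)%R, (x + e)%R]%classic by exact: segment_compact.
rewrite compact_cover.
move=> /(_ R `[(x - e)%R, (x + e)%R]%classic (fun y => ball y (d y))) [].
- by move=> i _; apply: ball_open; case: (Hd i).
- by move=> y yI; exists y => //; apply: ballxx; case: (Hd y).
move=> D' D'sub cov.
have : nu.-negligible (cover [set` D'] (fun y => ball y (d y))).
  rewrite /cover bigcup_fset big_seq; elim/big_ind: _.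
  - exact: negligible_set0.
  - by move=> A B; apply: negligibleU.
  - move=> i iD; apply/negligibleP; first exact: mball.
    by case: (Hd i) => _; apply; move: (D'sub _ iD); rewrite in_setE.
move=> /(negligibleS (_ : ball x e `<=` _)) => /(_ _).
have bI : ball x e `<=` `[(x - e)%R, (x + e)%R]%classic.
  rewrite ball_itv; apply: subset_itv; rewrite bnd_simp ?lexx //.
move=> /(_ (subset_trans bI cov)) /negligibleP => /(_ (mball _ _)) h.
by move: nu0; rewrite h ltxx.
Qed.

Local Close Scope ereal_scope.
Definition tent (x e y : R) : R := Num.max 0 (1 - `|y - x| / e).

Lemma tent_ge0 x e y : (0 <= tent x e y)%R.
Proof. by rewrite /tent le_max lexx. Qed.

Lemma tent_le1 x e y : (0 < e)%R -> (tent x e y <= 1)%R.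
Proof.
move=> e0; rewrite /tent ge_max ler01 /= lerBlDr lerDl.
by rewrite divr_ge0 // ltW.
Qed.

Lemma tent_out x e y : (0 < e)%R -> (e <= `|y - x|)%R -> tent x e y = 0%R.
Proof.
move=> e0 h; rewrite /tent; apply/max_idPl.
by rewrite subr_le0 ler_pdivlMr // mul1r.
Qed.

Lemma tent_half x e y : (0 < e)%R -> (`|y - x| < e / 2)%R -> (1 / 2 <= tent x e y)%R.
Proof.
move=> e0 h; rewrite /tent le_max; apply/orP; right.
have h2 : `|y - x| / e <= 1 / 2.
  by rewrite ler_pdivrMr //; apply: ltW; lra.
lra.
Qed.

Lemma tent_cont x e : continuous (tent x e).
Proof.
have -> : tent x e = (fun=> 0 : R^o) \max (fun y => 1 - `|y - x| / e : R^o).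
  by apply/funext => y.
move=> y; apply: continuous_max; first exact: cvg_cst.
apply: cvgB; first exact: cvg_cst.
apply: cvgM; last exact: cvg_cst.
by apply: cvg_norm; apply: cvgB; [exact: cvg_id|exact: cvg_cst].
Qed.

Lemma tent_tem (x e : R) : 0 < e -> tem_test (tent x e).
Proof.
move=> e0; split; first exact: tent_cont.
exists 1 => //; split.
- exists (expR (`|x| + e)) => y; rewrite /phi mul1r ger0_norm ?tent_ge0 //.
  have [h|h] := ltP (`|y - x|) e.
  + apply: le_trans (tent_le1 x e y e0) _.
    rewrite -expRD; have := ler_normD x (y - x); rewrite addrC subrK => hy.
    have := expR_ge1Dx (`|x| + e + - `|y|); lra.
  + by rewrite tent_out // mulr_ge0 // expR_ge0.
- exists 0; apply: cvg_near_cst; near=> y.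
  rewrite tent_out ?mul0r //.
  have h1 := ler_norm (y - x); have h2 := ler_norm x.
  have : `|x| + e < y by near: y; apply: nbhs_pinfty_gt; exact: num_real.
  lra.
- exists 0; apply: cvg_near_cst; near=> y.
  rewrite tent_out ?mul0r //.
  have h1 := ler_norm (x - y); rewrite distrC in h1.
  have h2 := ler_norm (- x); rewrite normrN in h2.
  have : - (`|x| + e) > y by near: y; apply: nbhs_ninfty_lt; exact: num_real.
  lra.
Unshelve. all: by end_near.
Qed.

Lemma tent_bnd (x e : R) : 0 < e -> exists C : R, forall y, `|tent x e y| <= C.
Proof.
by move=> e0; exists 1 => y; rewrite ger0_norm ?tent_ge0 // tent_le1.
Qed.

Lemma ballE (x e y : R) : ball x e y <-> `|x - y| < e.
Proof. by rewrite -ball_normE. Qed.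

Local Open Scope ereal_scope.
Lemma mtent (x e : R) (D : set R) : measurable_fun D (fun y => (tent x e y)%:E).
Proof.
have h : measurable_fun setT (fun y => (tent x e y)%:E).
  apply/measurable_EFinP.
  by apply: continuous_measurable_fun; exact: tent_cont.
exact: measurable_funTS h.
Qed.

Lemma int_tent_pos nu (x e : R) : (0 < e)%R -> supp nu x ->
  0 < \int[nu]_y (tent x e y)%:E.
Proof.
move=> e0 sx; have e20 : (0 < e / 2)%R by rewrite divr_gt0.
have hb := sx _ e20.
have h1 : \int[nu]_(y in ball x (e/2)) (cst (1/2)%:E) y <=
          \int[nu]_(y in ball x (e/2)) (tent x e y)%:E.
  apply: ge0_le_integral => //.
  - exact: mball.
  - by move=> y _; rewrite /= lee_fin divr_ge0.
  - exact: mtent.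
  - move=> y /ballE hy; rewrite /= lee_fin; apply: tent_half => //.
    by rewrite distrC.
have h2 : \int[nu]_(y in ball x (e/2)) (tent x e y)%:E <=
          \int[nu]_(y in setT) (tent x e y)%:E.
  apply: ge0_subset_integral => //; first exact: mball.
  - exact: mtent.
  - by move=> y _; rewrite lee_fin tent_ge0.
rewrite integral_cst in h1; last exact: mball.
apply: lt_le_trans (le_trans h1 h2).
by rewrite mule_gt0 // lte_fin divr_gt0.
Qed.

Lemma int_tent_ball nu (x e : R) : (0 < e)%R ->
  0 < \int[nu]_y (tent x e y)%:E -> 0 < nu (ball x e).
Proof.
move=> e0; apply: contraPP => /negP; rewrite -leNgt => hb.
have hb0 : nu (ball x e) = 0 by apply/eqP; rewrite eq_le hb measure_ge0.
apply/negP; rewrite -leNgt.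
have := @integral_indic _ _ R nu setT measurableT (ball x e) (mball _ _).
rewrite setIT hb0 => <-.
apply: ge0_le_integral => //.
- by move=> y _; rewrite lee_fin tent_ge0.
- exact: mtent.
- apply/measurable_EFinP; exact: measurable_indic (mball _ _).
- move=> y _; rewrite lee_fin indicE.
  have [/ballE hy|hy] := pselect (ball x e y).
    by rewrite mem_set // tent_le1.
  rewrite memNset // tent_out //; rewrite leNgt; apply/negP => h.
  by apply: hy; apply/ballE; rewrite distrC.
Qed.

Lemma ev_pos (u : nat -> \bar R) l : u @ \oo --> l -> 0 < l ->
  \forall n \near \oo, 0 < u n.
Proof. by move=> hu l0; exact: (hu _ (open_ereal_gt' l0)). Qed.

Lemma liminf_ge (u : nat -> \bar R) a : (\forall n \near \oo, a <= u n) ->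
  a <= limn_einf u.
Proof.
move=> h; rewrite limn_einf_lim; apply: lime_ge; first exact: is_cvg_einfs.
case: h => N _ hN; exists N => // n /= Nn.
apply: le_ereal_inf_tmp => _ [m /= nm <-]; apply: hN.
by rewrite /= (leq_trans Nn nm).
Qed.

Lemma limsup_le (u : nat -> \bar R) a : (\forall n \near \oo, u n <= a) ->
  limn_esup u <= a.
Proof.
move=> h; rewrite limn_esup_lim; apply: lime_le; first exact: is_cvg_esups.
case: h => N _ hN; exists N => // n /= Nn.
apply: ge_ereal_sup => _ [m /= nm <-]; apply: hN.
by rewrite /= (leq_trans Nn nm).
Qed.

Lemma liminf_le (u v : nat -> \bar R) : (forall n, u n <= v n) ->
  limn_einf u <= limn_einf v.
Proof.
move=> uv; rewrite !limn_einf_lim; apply: lee_lim; try exact: is_cvg_einfs.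
apply: nearW => n; apply: le_ereal_inf_tmp => _ [m /= nm <-].
apply: le_trans (uv m); apply: ereal_inf_lbound; by exists m.
Qed.
End S.

Theorem corollary5p2 (R : realType)
    (mun nun : nat -> {measure set R -> \bar R})
    (mu nu : {measure set R -> \bar R}) :
  ((forall n, Mtem (mun n) /\ Mtem (nun n)) /\ Mtem mu /\ Mtem nu /\
     tem_cvg mun mu /\ tem_cvg nun nu) \/
  ((forall n, Mrap (mun n) /\ Mrap (nun n)) /\ Mrap mu /\ Mrap nu /\
     rap_cvg mun mu /\ rap_cvg nun nu) ->
  (forall n, Rsupp (mun n) <= Lsupp (nun n)) ->
  [/\ Rsupp mu <= limn_einf (fun n => Rsupp (mun n)),
      limn_einf (fun n => Rsupp (mun n)) <= limn_esup (fun n => Lsupp (nun n)) &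
      limn_esup (fun n => Lsupp (nun n)) <= Lsupp nu].
Proof.
move=> hyp hRL.
have [Hm Hn] : (forall x e : R, (0 < e)%R ->
    (fun n => \int[mun n]_y (tent x e y)%:E) @ \oo --> \int[mu]_y (tent x e y)%:E) /\
  (forall x e : R, (0 < e)%R ->
    (fun n => \int[nun n]_y (tent x e y)%:E) @ \oo --> \int[nu]_y (tent x e y)%:E).
  case: hyp => [[_ [_ [_ [c1 c2]]]]|[_ [_ [_ [[c1 _] [c2 _]]]]]].
    by split=> x e e0; [apply: c1|apply: c2]; exact: tent_tem.
  by split=> x e e0; [apply: c1|apply: c2];
    [exact: tent_cont|exact: tent_bnd|exact: tent_cont|exact: tent_bnd].
split.
- rewrite /Rsupp; apply: ge_ereal_sup => _ [x sx <-].
  apply/lee_subgt0Pr => e e0; apply: liminf_ge.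
  have := ev_pos _ _ (Hm x e e0) (int_tent_pos _ _ _ e0 sx).
  apply: filterS => n hn.
  have [y [sy hy]] := supp_near _ _ _ e0 (int_tent_ball _ _ _ e0 hn).
  apply: (@le_trans _ _ y%:E).
    rewrite -EFinB lee_fin; have := ler_norm (x - y); lra.
  by apply: ereal_sup_ubound; exists y.
- apply: le_trans (limn_einf_sup _); apply: liminf_le.
  exact: hRL.
- apply: le_ereal_inf_tmp => _ [x sx <-].
  apply/lee_addgt0Pr => e e0; apply: limsup_le.
  have := ev_pos _ _ (Hn x e e0) (int_tent_pos _ _ _ e0 sx).
  apply: filterS => n hn.
  have [y [sy hy]] := supp_near _ _ _ e0 (int_tent_ball _ _ _ e0 hn).
  apply: (@le_trans _ _ y%:E).
    by apply: ereal_inf_lbound; exists y.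
  rewrite -EFinD lee_fin; have := ler_norm (y - x); rewrite distrC; lra.
Qed.
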